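(* Let $\alpha\ge2$ be an integer, $\Delta\ge3$ an integer, and $\beta_\mu>\beta_\nu\ge\frac{\Delta-2}{\Delta}$ with $\beta:=(\beta_\nu/\beta_\mu)^\alpha\beta_\mu<\frac{\Delta-2}{\Delta}$. For every $\Delta$-regular graph $G=(V,E)$, letting $\nu,\mu$ be the Gibbs distributions of $(G,\beta_\nu)$ and $(G,\beta_\mu)$, $$Z(G,\beta)\ \le\ \frac{Z(G,\beta_\nu)^\alpha}{Z(G,\beta_\mu)^{\alpha-1}}\sum_{\sigma\in\{-1,+1\}^V}\mu(\sigma)\left(\frac{\nu(\sigma)}{\mu(\sigma)}+1\right)^\alpha\ \le\ 3^\alpha Z(G,\beta).$$
   Context: For a graph $G=(V,E)$ and $\gamma>0$, the Ising model $(G,\gamma)$ has Gibbs distribution on $\{-1,+1\}^V$ given by $\pi(\sigma)=\gamma^{m(\sigma)}/Z(G,\gamma)$, where $m(\sigma)=|\{\{u,v\}\in E:\sigma_u=\sigma_v\}|$ and $Z(G,\gamma)=\sum_{\sigma\in\{-1,+1\}^V}\gamma^{m(\sigma)}$. *)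

(* Defs.v *)
From HB Require Import structures.
From mathcomp Require Import all_boot all_order all_algebra.
From mathcomp Require Import reals.
Set Implicit Arguments. Unset Strict Implicit. Unset Printing Implicit Defensive.
Import Order.TTheory GRing.Theory Num.Theory.
Local Open Scope ring_scope.

Definition simple_graph (T : finType) (e : rel T) : Prop :=
  (forall u v, e u v = e v u) /\ (forall u, ~~ e u u).

Definition regular (T : finType) (e : rel T) (Delta : nat) : Prop :=
  forall v : T, #|[set u | e v u]| = Delta.

Definition edges (T : finType) (e : rel T) : {set {set T}} :=
  [set [set u; v] | u in T, v in T & e u v].

(* Spin configurations sigma : V -> {-1,+1}, encoded as bool (true = +1). *)
Definition spin (T : finType) := {ffun T -> bool}.

Definition mono (T : finType) (e : rel T) (s : spin T) : nat :=
  #|[set E in edges e | [forall u in E, forall v in E, s u == s v]]|.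

Definition Zpart (R : realType) (T : finType) (e : rel T) (g : R) : R :=
  \sum_(s : spin T) g ^+ mono e s.

Definition gibbs (R : realType) (T : finType) (e : rel T) (g : R) (s : spin T) : R :=
  g ^+ mono e s / Zpart e g.

(* Main.v *)
Require Import Defs.
From HB Require Import structures.
From mathcomp Require Import all_boot all_order all_algebra.
From mathcomp Require Import reals.
From mathcomp Require Import ring lra zify.
Import Order.TTheory GRing.Theory Num.Theory.
Local Open Scope ring_scope.

Lemma bern (R : realFieldType) (x : R) n : 0 <= x -> 1 + n%:R * (x - 1) <= x ^+ n.
Proof.
move=> x0; elim: n => [|n IH]; first by rewrite mul0r addr0 expr0.
rewrite exprS -addn1 natrD.
have h1 : x * (1 + n%:R * (x - 1)) <= x * x ^+ n by rewrite ler_wpM2l.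
have hn : 0 <= (n%:R : R) by [].
apply: le_trans h1.
have h3 := mulr_ge0 hn (sqr_ge0 (x - 1)).
suff : x * (1 + n%:R * (x - 1)) - (1 + (n%:R + 1) * (x - 1)) = n%:R * (x - 1) ^+ 2 by lra.
ring.
Qed.

Lemma pow2b (R : realFieldType) (x : R) n : 0 <= x ->
  (x + 1) ^+ n <= 2 ^+ n * (x ^+ n + 1).
Proof.
move=> x0; have h2 : 0 <= (2:R) ^+ n by rewrite exprn_ge0.
have hx : 0 <= x ^+ n by rewrite exprn_ge0.
rewrite mulrDr mulr1.
case: (lerP x 1) => hx1.
- apply: (@le_trans _ _ (2 ^+ n)); last by rewrite lerDr mulr_ge0.
  apply: lerXn2r; rewrite ?nnegrE; lra.
- apply: (@le_trans _ _ (2 ^+ n * x ^+ n)); last by rewrite lerDl.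
  rewrite -exprMn; apply: lerXn2r; rewrite ?nnegrE; lra.
Qed.

Lemma core (R : realFieldType) (I : finType) (i0 : I) (a b : I -> R) (n : nat) :
  (2 <= n)%N -> (forall i, 0 < a i) -> (forall i, 0 < b i) ->
  let A := \sum_i a i in let B := \sum_i b i in
  let P := B ^+ n / A ^+ (n - 1) in
  let S := P * \sum_i (a i / A) * ((b i / B) / (a i / A) + 1) ^+ n in
  let Zb := \sum_i b i ^+ n / a i ^+ (n - 1) in
  Zb <= S /\ S <= 3%:R ^+ n * Zb.
Proof.
move=> n2 ha hb A B P S Zb.
have Ap : 0 < A by rewrite /A (bigD1 i0) //= ltr_wpDr ?sumr_ge0 // => i _; apply/ltW.
have Bp : 0 < B by rewrite /B (bigD1 i0) //= ltr_wpDr ?sumr_ge0 // => i _; apply/ltW.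
have Pp : 0 <= P by rewrite divr_ge0 // exprn_ge0 // ltW.
set x := fun i => (b i / B) / (a i / A).
have xp : forall i, 0 <= x i.
  by move=> i; rewrite /x !divr_ge0 // ltW.
have key : forall i, P * (a i / A) * x i ^+ n = b i ^+ n / a i ^+ (n - 1).
  move=> i; rewrite /P /x; case: n n2 {P Pp S Zb x xp} => [//|k] _.
  rewrite subSS !expr_div_n !exprS; have := ha i; have := hb i.
  move=> bi ai; rewrite subn0; field.
  by rewrite ?(gt_eqF Ap) ?(gt_eqF Bp) ?(gt_eqF ai) ?expf_neq0 ?(gt_eqF Ap) ?(gt_eqF Bp) ?(gt_eqF ai).
have ZbE : Zb = \sum_i P * (a i / A) * x i ^+ n by apply: eq_bigr => i _; rewrite key.
have SE : S = \sum_i P * (a i / A) * (x i + 1) ^+ n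
  by rewrite /S mulr_sumr; apply: eq_bigr => i _; rewrite mulrA.
have wi : forall i, 0 <= P * (a i / A) by move=> i; rewrite mulr_ge0 // divr_ge0 // ltW.
split.
  rewrite ZbE SE; apply: ler_sum => i _; rewrite ler_wpM2l //.
  by apply: lerXn2r; rewrite ?nnegrE ?addr_ge0 ?lerDl.
have sumz : \sum_i a i / A = 1 by rewrite -mulr_suml divff // gt_eqF.
have sumzx : \sum_i (a i / A) * x i = 1.
  rewrite -[RHS](@divff _ B) ?gt_eqF // mulr_suml; apply: eq_bigr => i _.
  rewrite /x; have := ha i => ai; field.
  by rewrite ?(gt_eqF Ap) ?(gt_eqF Bp) ?(gt_eqF ai).
have PZ : P <= Zb.
  rewrite ZbE.
  apply: (@le_trans _ _ (\sum_i P * (a i / A) * (1 + n%:R * (x i - 1)))); last first.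
    by apply: ler_sum => i _; rewrite ler_wpM2l // bern.
  have E : \sum_i P * (a i / A) * (1 + n%:R * (x i - 1)) =
     P * (\sum_i a i / A) + (P * n%:R) * (\sum_i (a i / A) * x i)
       - (P * n%:R) * \sum_i a i / A.
    rewrite !mulr_sumr -big_split -sumrB /=; apply: eq_bigr => i _; ring.
  by rewrite E sumzx sumz; lra.
have h23n : (2 ^ n * 2 <= 3 ^ n)%N.
  case: n n2 {P Pp S Zb x xp key ZbE SE wi PZ sumz sumzx} => [//|[//|k]] _.
  elim: k => [//|k IH]; rewrite (expnS 2 k.+2) (expnS 3 k.+2); lia.
have h23 : (2:R) ^+ n * 2 <= 3%:R ^+ n.
  by rewrite -natrX -[2]/(2%:R) -natrX -natrM ler_nat.
have Zb0 : 0 <= Zb by apply: le_trans PZ.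
rewrite SE.
apply: (@le_trans _ _ (\sum_i P * (a i / A) * (2 ^+ n * (x i ^+ n + 1)))).
  by apply: ler_sum => i _; rewrite ler_wpM2l // pow2b.
have E : \sum_i P * (a i / A) * (2 ^+ n * (x i ^+ n + 1)) =
   2 ^+ n * (\sum_i P * (a i / A) * x i ^+ n) + 2 ^+ n * (P * \sum_i a i / A).
  rewrite !mulr_sumr -big_split /=; apply: eq_bigr => i _; ring.
rewrite E -ZbE sumz mulr1.
have h2 : 0 <= (2:R) ^+ n by rewrite exprn_ge0.
apply: (@le_trans _ _ (2 ^+ n * 2 * Zb)); last by rewrite ler_wpM2r.
nra.
Qed.


Lemma aux (R : realFieldType) (u v : R) k : 0 < u -> 0 < v ->
  (u / v) ^+ k.+1 * v = u ^+ k.+1 / v ^+ k.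
Proof.
move=> u0 v0; rewrite expr_div_n (exprS v).
field; by rewrite ?expf_neq0 ?gt_eqF.
Qed.

Lemma aux2 (R : realFieldType) (x y : R) m k : 0 < x -> 0 < y ->
  ((x / y) ^+ k.+1 * y) ^+ m = (x ^+ m) ^+ k.+1 / (y ^+ m) ^+ k.
Proof.
move=> x0 y0; rewrite exprMn (exprAC (x / y)) (expr_div_n x y m) aux //; exact: exprn_gt0.
Qed.

Theorem lemma7p4 (R : realType) (alpha Delta : nat) (bmu bnu : R)
  (T : finType) (e : rel T) :
  (2 <= alpha)%N -> (3 <= Delta)%N ->
  bnu < bmu -> (Delta%:R - 2) / Delta%:R <= bnu ->
  (bnu / bmu) ^+ alpha * bmu < (Delta%:R - 2) / Delta%:R ->
  simple_graph e -> regular e Delta ->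
  let beta := (bnu / bmu) ^+ alpha * bmu in
  let S := Zpart e bnu ^+ alpha / Zpart e bmu ^+ (alpha - 1)
           * \sum_(s : spin T) gibbs e bmu s
               * (gibbs e bnu s / gibbs e bmu s + 1) ^+ alpha in
  Zpart e beta <= S /\ S <= 3%:R ^+ alpha * Zpart e beta.
Proof.
move=> ha hD hlt hnu _ _ _ beta S.
have D0 : 0 < (Delta%:R - 2) / Delta%:R :> R.
  have h3 : (3:R) <= Delta%:R by rewrite (ler_nat R 3 Delta).
  by rewrite divr_gt0 //; lra.
have nu0 : 0 < bnu by apply: lt_le_trans hnu.
have mu0 : 0 < bmu by apply: lt_trans hlt.
have [] := @core R (spin T) [ffun=> true] (fun s => bmu ^+ mono e s)
  (fun s => bnu ^+ mono e s) alpha ha (fun i => exprn_gt0 _ mu0)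
  (fun i => exprn_gt0 _ nu0).
have ZE : Zpart e beta = \sum_(s : spin T) (bnu ^+ mono e s) ^+ alpha / (bmu ^+ mono e s) ^+ (alpha - 1).
  rewrite /Zpart; apply: eq_bigr => s _; rewrite /beta.
  case: alpha ha {S beta} => [//|k] _; rewrite subSS subn0.
  by rewrite aux2 //; apply: exprn_gt0.
by rewrite ZE; split.
Qed.
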